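(* Let $n \ge 8$ with $n\equiv 0\pmod 4$, $s$ an integer with $s^2\equiv 1\pmod n$, $s\not\equiv\pm1\pmod n$, and $G = \langle x,y \mid x^2 = y^{n/2},\ y^n = 1,\ yx = xy^s\rangle$. Let $T_1,\dots,T_{n-3}$ be sequences over $G$ with $|T_i|=2$ for all $i\in[1,n-3]$, let $T = T_1\cdot\ldots\cdot T_{n-3}$, and let $T_0$ be a sequence over $G$ with $|T_0|=4$ such that $\{y^{2w}, y^{2w+n/2}\}\subset\pi(T_0)$ for some integer $w$. Suppose there are integers $a,b$ with $\gcd(a-b,n/2)=1$ such that $y^{2a}\in\pi(T_i)$ for $i\in[1,\frac n2-1]$ and $y^{2b}\in\pi(T_i)$ for $i\in[\frac n2, n-3]$. Then $T\cdot T_0$ has a subsequence $T'$ of length $n$ with $1\in\pi(T')$ and $T_0$ a subsequence of $T'$.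
   Context: A sequence over $G$ is a finite unordered list of elements with repetition; $\cdot$ denotes concatenation. For $S=g_1\cdots g_k$, $\pi(S)$ is the set of all products $g_{\tau(1)}\cdots g_{\tau(k)}$ over all permutations $\tau$ of $[1,k]$. *)

(* Defs.v *)
From mathcomp Require Import all_boot all_order all_algebra all_fingroup.
Set Implicit Arguments. Unset Strict Implicit. Unset Printing Implicit Defensive.
Local Open Scope group_scope.

(* y ^ k for an integer exponent k, for an element y with y ^+ n = 1 (n > 0):
   reduce k modulo n to a natural number. *)
Definition zexpg (gT : finGroupType) (y : gT) (n : nat) (k : int) : gT :=
  y ^+ `|(k %% n%:Z)%Z|%N.

Definition piseq (gT : finGroupType) (S : seq gT) (g : gT) : Prop :=
  exists t : seq gT, perm_eq t S /\ \prod_(h <- t) h = g.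

(* S is a subsequence of U (sequences are unordered lists with repetition):
   U = S . R for some sequence R, up to reordering. *)
Definition subseqm (gT : finGroupType) (S U : seq gT) : Prop :=
  exists R : seq gT, perm_eq U (S ++ R).

(* Main.v *)
Require Import Defs.
From mathcomp Require Import all_boot all_order all_algebra all_fingroup.
From mathcomp Require Import ring.
Import GRing.Theory Num.Theory.
Local Open Scope group_scope.

Lemma zexpgD (gT : finGroupType) (y : gT) (n : nat) (k1 k2 : int) :
  (0 < n)%N -> y ^+ n = 1 ->
  zexpg y n k1 * zexpg y n k2 = zexpg y n (k1 + k2)%R.
Proof.
move=> n0 hy; rewrite /zexpg -expgD -[LHS](expg_mod _ hy); congr (y ^+ _).
have nz : ((Posz n) != 0)%R by rewrite eqz_nat -lt0n.
apply/eqP; rewrite -eqz_nat -modz_nat PoszD !gez0_abs ?modz_ge0 //.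
by rewrite modzDm.
Qed.

Lemma zexpg0 (gT : finGroupType) (y : gT) (n : nat) (q : int) :
  zexpg y n (q * (Posz n))%R = 1.
Proof. by rewrite /zexpg modzMl. Qed.

Lemma zexpgX (gT : finGroupType) (y : gT) (n : nat) (k : int) (j : nat) :
  (0 < n)%N -> y ^+ n = 1 ->
  zexpg y n k ^+ j = zexpg y n (k * (Posz j))%R.
Proof.
move=> n0 hy; elim: j => [|j IH].
  by rewrite expg0 mulr0 -(mul0r ((Posz n))) zexpg0.
by rewrite expgS IH zexpgD // intS mulrDr mulr1.
Qed.

Lemma piseq_cat (gT : finGroupType) (S U : seq gT) g h :
  piseq S g -> piseq U h -> piseq (S ++ U) (g * h).
Proof.
move=> [t [pt <-]] [t' [pt' <-]]; exists (t ++ t'); split.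
  exact: perm_cat.
by rewrite big_cat.
Qed.

Lemma piseq_flat (gT : finGroupType) (Tf : nat -> seq gT) g (l : seq nat) :
  (forall i, i \in l -> piseq (Tf i) g) ->
  piseq (flatten [seq Tf i | i <- l]) (g ^+ size l).
Proof.
elim: l => [|i l IH] H /=.
  by exists [::]; split => //; rewrite big_nil expg0.
rewrite expgS; apply: piseq_cat; first by apply: H; rewrite mem_head.
by apply: IH => j jl; apply: H; rewrite in_cons jl orbT.
Qed.

Lemma size_flat (gT : finGroupType) (Tf : nat -> seq gT) (l : seq nat) :
  (forall i, i \in l -> size (Tf i) = 2%N) ->
  size (flatten [seq Tf i | i <- l]) = (2 * size l)%N.
Proof.
elim: l => [|i l IH] H //=.
rewrite size_cat H ?mem_head // IH; last by move=> j jl; apply: H; rewrite in_cons jl orbT.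
by rewrite mulnS.
Qed.

Lemma nt_step (c R u v d : int) : (u * c + v * d = 1)%R -> d != 0%R ->
  exists q : int, (c * Posz `|((- R * u) %% d)%Z|%N + R = q * d)%R.
Proof.
move=> Bz dz; rewrite gez0_abs ?modz_ge0 //.
exists (R * v - c * ((- R * u) %/ d)%Z)%R.
have e := divz_eq (- R * u)%R d.
have -> : ((- R * u) %% d)%Z = (- R * u - ((- R * u) %/ d)%Z * d)%R.
  by rewrite {2}e addrC addKr.
rewrite -[R in (_ + R)%R]mulr1 -Bz; ring.
Qed.

From mathcomp Require Import zify.

Theorem lemma4p1 (gT : finGroupType) (G : {group gT}) (x y : gT) (n : nat) (s : int)
  (hn8 : (8 <= n)%N) (hn4 : (4 %| n)%N)
  (hs1 : (s ^+ 2 = 1 %[mod n%:Z])%Z)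
  (hs2 : (s != 1 %[mod n%:Z])%Z) (hs3 : (s != - 1 %[mod n%:Z])%Z)
  (hgen : G = <<[set x; y]>>)
  (hr1 : x ^+ 2 = y ^+ (n %/ 2)) (hr2 : y ^+ n = 1)
  (hr3 : y * x = x * zexpg y n s)
  (hG : G \isog Grp (u : v : (u ^+ 2 = v ^+ (n %/ 2), v ^+ n = 1,
                              v * u = u * v ^+ `|(s %% n%:Z)%Z|%N)))
  (Tf : nat -> seq gT) (T0 : seq gT)
  (hTf : forall i, (1 <= i <= n - 3)%N -> size (Tf i) = 2%N /\ all (mem G) (Tf i))
  (hT0 : size T0 = 4%N /\ all (mem G) T0)
  (w : int)
  (hw : piseq T0 (zexpg y n (2 * w)%R) /\ piseq T0 (zexpg y n (2 * w + (n %/ 2)%:Z)%R))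
  (a b : int) (hab : coprimez (a - b)%R (n %/ 2)%:Z)
  (ha : forall i, (1 <= i <= n %/ 2 - 1)%N -> piseq (Tf i) (zexpg y n (2 * a)%R))
  (hb : forall i, (n %/ 2 <= i <= n - 3)%N -> piseq (Tf i) (zexpg y n (2 * b)%R)) :
  let T := flatten [seq Tf i | i <- iota 1 (n - 3)] in
  exists T' : seq gT,
    subseqm T' (T ++ T0) /\ size T' = n /\ piseq T' 1 /\ subseqm T0 T'.
Proof.
move=> T.
have [k nk] := dvdnP hn4; subst n.
have k2 : (2 <= k)%N by clear -hn8; lia.
have hn2 : (k * 4) %/ 2 = (2 * k)%N.
  by rewrite (_ : k * 4 = (2 * k) * 2)%N ?mulnK //; lia.
rewrite hn2 in ha hb hw hab.
clear hs1 hs2 hs3 hn4 hgen hG hr3 hr1 hn8.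
have n0 : (0 < k * 4)%N by lia.
set m := (2 * k - 2)%N.
suff [j [E0 [q [jm [hT0E eq]]]]] : exists (j : nat) (E0 q : int), (j <= m)%N /\
    piseq T0 (zexpg y (k * 4) E0) /\
    ((2 * a) * Posz j + (2 * b) * Posz (m - j) + E0 = q * Posz (k * 4))%R.
  set l1 := iota 1 j; set l2 := iota (2 * k) (m - j).
  have hl1 : forall i, i \in l1 -> (1 <= i <= 2 * k - 1)%N.
    by move=> i; rewrite mem_iota; lia.
  have hl2 : forall i, i \in l2 -> (2 * k <= i <= k * 4 - 3)%N.
    by move=> i; rewrite mem_iota; lia.
  exists (flatten [seq Tf i | i <- l1 ++ l2] ++ T0); split; last split; last split.
  - pose B := iota (1 + j) (2 * k - 1 - j); pose D := iota (2 * k + (m - j)) j.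
    exists (flatten [seq Tf i | i <- B] ++ flatten [seq Tf i | i <- D]).
    have -> : T = flatten [seq Tf i | i <- l1 ++ B ++ l2 ++ D].
      rewrite /T /l1 /B /l2 /D.
      have -> : (k * 4 - 3 = j + ((2 * k - 1 - j) + ((m - j) + j)))%N by lia.
      rewrite !iotaD.
      by have -> : (1 + j + (2 * k - 1 - j) = 2 * k)%N by lia.
    rewrite !map_cat !flatten_cat.
    apply/seq.permP => p; rewrite !count_cat.
    set x1 := count _ (flatten _); set x2 := count _ (flatten _);
    set x3 := count _ (flatten _); set x4 := count _ (flatten _).
    set x5 := count _ T0.
    clear; lia.
  - rewrite size_cat size_flat ?hT0.1 ?size_cat ?size_iota; last first.
    move=> i; rewrite mem_cat => hi0.
    have hi' : (1 <= i <= k * 4 - 3)%N.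
      by case/orP: hi0 => [/hl1|/hl2] hi; clear -hi k2; lia.
    by case: (hTf i hi').
    rewrite /m in jm *; clear -jm k2. lia.
  - rewrite map_cat flatten_cat.
    have -> : (1 = zexpg y (k * 4) (2 * a)%R ^+ size l1 *
                  zexpg y (k * 4) (2 * b)%R ^+ size l2 * zexpg y (k * 4) E0).
      by rewrite !size_iota !zexpgX // !zexpgD // eq zexpg0.
    apply: piseq_cat => //; apply: piseq_cat; apply: piseq_flat => i hi.
      by apply: ha; apply: hl1.
    by apply: hb; apply: hl2.
  - by exists (flatten [seq Tf i | i <- l1 ++ l2]); rewrite perm_catC.
have dz : (Posz (2 * k) != 0)%R by rewrite eqz_nat; clear -k2; lia.
have [u [v Bz]] := Bezoutz (a - b)%R (Posz (2 * k)).
rewrite (eqP hab) in Bz.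
have fin : forall (j : nat) (e q : int), (j <= m)%N ->
    ((a - b) * Posz j + (b * Posz m + w + e) = q * Posz (2 * k))%R ->
    ((2 * a) * Posz j + (2 * b) * Posz (m - j) + (2 * w + 2 * e) = q * Posz (k * 4))%R.
  move=> j e q jm he; rewrite -subzn //.
  have -> : ((2 * a) * Posz j + (2 * b) * (Posz m - Posz j) + (2 * w + 2 * e) =
     2 * ((a - b) * Posz j + (b * Posz m + w + e)))%R by ring.
  rewrite he !PoszM; ring.
have lt : forall R, (`|((- R * u) %% Posz (2 * k))%Z|%N < 2 * k)%N.
  move=> R; rewrite -ltz_nat gez0_abs ?modz_ge0 // ltz_pmod //.
  by rewrite ltz_nat; clear -k2; lia.
have [q0 e0] := nt_step (a - b)%R (b * Posz m + w + 0)%R u v (Posz (2 * k)) Bz dz.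
have [q1 e1] := nt_step (a - b)%R (b * Posz m + w + Posz k)%R u v (Posz (2 * k)) Bz dz.
move: e0 e1 (lt (b * Posz m + w + 0)%R) (lt (b * Posz m + w + Posz k)%R).
set j0 := `|_|%N; set j1 := `|_|%N => e0 e1 l0 l1.
case E0: (j0 == 2 * k - 1)%N; last first.
  exists j0, (2 * w + 2 * 0)%R, q0; split; last split.
  - by move/negbT: E0; rewrite /m; clear -l0 k2; lia.
  - by rewrite mulr0 addr0; exact: hw.1.
  by apply: fin => //; move/negbT: E0; rewrite /m; clear -l0 k2; lia.
case E1: (j1 == 2 * k - 1)%N; last first.
  exists j1, (2 * w + 2 * Posz k)%R, q1; split; last split.
  - by move/negbT: E1; rewrite /m; clear -l1 k2; lia.
  - by rewrite -PoszM; exact: hw.2.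
  by apply: fin => //; move/negbT: E1; rewrite /m; clear -l1 k2; lia.
have jj : j1 = j0 by rewrite (eqP E0) (eqP E1).
have : (Posz (2 * k) %| Posz k)%Z.
  apply/dvdzP; exists (q1 - q0)%R.
  have -> : Posz k = (((a - b) * Posz j1 + (b * Posz m + w + Posz k)) -
                      ((a - b) * Posz j0 + (b * Posz m + w + 0)))%R by rewrite jj; ring.
  by rewrite e0 e1; ring.
rewrite dvdzE /= => /dvdn_leq; clear -k2; lia.
Qed.
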